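(* Let $m\le n$, $K\in\{0,\ldots,m-1\}$, $\gamma>0$, $\mathcal{C}\subset\mathrm{dom} f\subset\mathbb{R}^{m\times n}$ satisfy condition (C1), and suppose $f+\delta_{\mathcal C}$ is directionally differentiable and Lipschitz continuous on its domain $\mathcal C$ with constant $M$ with respect to the nuclear norm. Then every d-stationary point $X^*$ of $\min_X f(X)+\gamma\mathcal{T}_K(X)+\delta_{\mathcal C}(X)$ satisfies $\mathcal{T}_K(X^* )=0$ provided $\gamma>M$.
   Context: $\mathcal{T}_K(X)=\sum_{i=K+1}^{\min\{m,n\}}\sigma_i(X)$ (singular values in decreasing order); nuclear norm $\|X\|_*=\sum_i\sigma_i(X)$. $\delta_{\mathcal C}$ = indicator of $\mathcal C$. Feasible cone $\mathcal{F}(X;\mathcal{C})=\{D\mid \exists\varsigma'>0:\ X+\varsigma D\in\mathcal{C}\ \forall\varsigma\in(0,\varsigma')\}$. Directional differentiability: $h'(X;D)=\lim_{\varsigma\searrow0}(h(X+\varsigma D)-h(X))/\varsigma$ exists in $\mathbb R$ for $X\in\mathrm{dom}\,h$, $D\in\mathcal F(X;\mathrm{dom}\,h)$. Condition (C1): every $X\in\mathcal C$ has an SVD $X=U[\mathrm{diag}(\sigma_1(X),\ldots,\sigma_m(X)),0]V^\top$ with $-U[\mathrm{diag}(0,\ldots,0,\sigma_{K+1}(X),\ldots,\sigma_m(X)),0]V^\top\in\mathcal{F}(X;\mathcal C)$. $X^*$ is d-stationary if the objective's directional derivative at $X^*$ is $\ge0$ for all $D\in\mathcal F(X^*;\mathcal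 C)$. *)

(* Defs.v *)
From HB Require Import structures.
From mathcomp Require Import all_boot all_order all_algebra.
From mathcomp Require Import all_classical all_reals all_analysis.
Set Implicit Arguments. Unset Strict Implicit. Unset Printing Implicit Defensive.
Import Order.TTheory GRing.Theory Num.Theory.
Import numFieldNormedType.Exports.
Local Open Scope classical_set_scope.
Local Open Scope ring_scope.

Section Defs.
Variables (R : realType) (m n : nat).
Local Notation mat := 'M[R]_(m, n).

Definition rdiag (s : nat -> R) : mat :=
  \matrix_(i < m, j < n) (if (i : nat) == j then s i else 0).

Definition is_svd (X : mat) (U : 'M[R]_m) (s : nat -> R) (V : 'M[R]_n) :=
  [/\ U^T *m U = 1%:M, V^T *m V = 1%:M,
      X = U *m rdiag s *m V^T &
      [/\ (forall i, 0 <= s i),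
      (forall i j, (i <= j)%N -> (j < minn m n)%N -> s j <= s i) &
      (forall i, (minn m n <= i)%N -> s i = 0)]].

(* singular values sigma X i = sigma_{i+1}(X) in the paper's 1-based notation,
   in decreasing order (chosen from some SVD; they are unique) *)
Definition sigma (X : mat) : nat -> R :=
  xget (fun=> 0) (fun s => exists U V, is_svd X U s V).

Definition TK (K : nat) (X : mat) : R := \sum_(K <= i < minn m n) sigma X i.

Definition nucnorm (X : mat) : R := \sum_(0 <= i < minn m n) sigma X i.

Definition feas_cone (C : set mat) (X : mat) : set mat :=
  fun D => exists2 s' : R, 0 < s' &
    forall s : R, 0 < s -> s < s' -> C (X + s *: D).

Definition condC1 (K : nat) (C : set mat) :=
  forall X, C X -> exists U V,
    [/\ U^T *m U = 1%:M, V^T *m V = 1%:M,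
        X = U *m rdiag (sigma X) *m V^T &
        feas_cone C X
          (- (U *m rdiag (fun i => if (i < K)%N then 0 else sigma X i) *m V^T))].

Definition dquot (h : mat -> R) (X D : mat) : R -> R :=
  fun t => (h (X + t *: D) - h X) / t.

(* directional differentiability of h + delta_C (h real valued on C):
   for X in C = dom (h + delta_C), D in F(X;C), the limit exists in R *)
Definition dir_diff_on (h : mat -> R) (C : set mat) :=
  forall X D, C X -> feas_cone C X D ->
    exists L : R, dquot h X D @ 0^'+ --> L.

Definition lipschitz_nuc_on (h : mat -> R) (C : set mat) (M : R) :=
  forall X Y, C X -> C Y -> `|h X - h Y| <= M * nucnorm (X - Y).

(* d-stationarity of X for min_X phi(X) + delta_C(X) (phi real valued on C) *)
Definition d_stationary (phi : mat -> R) (C : set mat) (X : mat) :=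
  C X /\ forall D, feas_cone C X D ->
    exists2 L : R, dquot phi X D @ 0^'+ --> L & 0 <= L.

End Defs.

(* Main.v *)
Require Import Defs.
From HB Require Import structures.
From mathcomp Require Import all_boot all_order all_algebra.
From mathcomp Require Import all_classical all_reals all_analysis.
From mathcomp Require Import ring lra.
Import Order.TTheory GRing.Theory Num.Theory.
Local Open Scope classical_set_scope.
Local Open Scope ring_scope.

Lemma char_poly_orth (R : comUnitRingType) k (V A : 'M[R]_k) :
  V^T *m V = 1%:M -> char_poly (V *m A *m V^T) = char_poly A.
Proof.
move=> hV; have hV' : V *m V^T = 1%:M by apply: mulmx1C.
set P := map_mx (@polyC R) V; set Q := map_mx (@polyC R) V^T.
have PQ : P *m Q = 1%:M by rewrite -map_mxM hV' map_mx1.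
rewrite /char_poly.
have -> : char_poly_mx (V *m A *m V^T) = P *m char_poly_mx A *m Q.
  rewrite /char_poly_mx mulmxBr mulmxBl scalar_mxC.
  rewrite -[_ *m P *m Q]mulmxA PQ mulmx1.
  by rewrite !map_mxM.
rewrite !det_mulmx mulrC mulrA -det_mulmx.
by rewrite [Q *m P]mulmx1C // det1 mul1r.
Qed.

Section LA.
Variables (R : realType) (m n : nat).
Hypothesis mn : (m <= n)%N.
Local Notation mat := 'M[R]_(m, n).

Definition dd (s : nat -> R) (j : nat) : R := if (j < m)%N then s j ^+ 2 else 0.

Lemma rdiag_gram (s : nat -> R) :
  (rdiag m n s)^T *m rdiag m n s = diag_mx (\row_(j < n) dd s j).
Proof.
apply/matrixP => j k; rewrite !mxE.
under eq_bigr => i _ do rewrite !mxE.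
case: (ltnP j m) => [jm|jm].
- rewrite (bigD1 (Ordinal jm)) //= big1 ?addr0; last first.
    move=> i ij; have -> : ((i : nat) == j) = (i == Ordinal jm) by [].
    by rewrite (negbTE ij) mul0r.
  rewrite eqxx /dd jm; case: (eqVneq j k) => [->|jk].
    by rewrite eqxx expr2 mulr1n.
  have -> : ((Ordinal jm : nat) == k) = (j == k) by [].
  by rewrite (negbTE jk) mulr0 mulr0n.
- rewrite big1; last first.
    move=> i _; rewrite (_ : ((i : nat) == j) = false) ?mul0r //.
    apply/negbTE; apply/eqP => e; move: (ltn_ord i); rewrite e => h.
    by move: (leq_trans h jm); rewrite ltnn.
  by rewrite /dd ltnNge jm /= mul0rn.
Qed.

Lemma svd_gram (U : 'M[R]_m) (V : 'M[R]_n) s : U^T *m U = 1%:M ->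
  (U *m rdiag m n s *m V^T)^T *m (U *m rdiag m n s *m V^T) =
  V *m diag_mx (\row_(j < n) dd s j) *m V^T.
Proof.
move=> hU; rewrite !trmx_mul trmxK -rdiag_gram.
rewrite !mulmxA; congr (_ *m _); rewrite -!mulmxA; congr (_ *m _).
by rewrite [U^T *m _]mulmxA hU mul1mx.
Qed.

Lemma svd_char (U : 'M[R]_m) (V : 'M[R]_n) s : U^T *m U = 1%:M -> V^T *m V = 1%:M ->
  char_poly ((U *m rdiag m n s *m V^T)^T *m (U *m rdiag m n s *m V^T)) =
  \prod_(x <- map (dd s) (iota 0 n)) ('X - x%:P).
Proof.
move=> hU hV; rewrite svd_gram // char_poly_orth // char_poly_trig ?diag_mx_is_trig //.
rewrite big_map -[n in iota 0 n]subn0 big_mkord.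
by apply: eq_bigr => i _; rewrite !mxE eqxx mulr1n.
Qed.

Lemma svd_perm (U1 U2 : 'M[R]_m) (V1 V2 : 'M[R]_n) s1 s2 :
  U1^T *m U1 = 1%:M -> V1^T *m V1 = 1%:M ->
  U2^T *m U2 = 1%:M -> V2^T *m V2 = 1%:M ->
  U1 *m rdiag m n s1 *m V1^T = U2 *m rdiag m n s2 *m V2^T ->
  perm_eq (map (dd s1) (iota 0 n)) (map (dd s2) (iota 0 n)).
Proof.
move=> h1 h2 h3 h4 e; apply: prod_XsubC_eq.
by rewrite -(svd_char U1 V1 s1 h1 h2) e svd_char.
Qed.

Definition svd_ok (s : nat -> R) :=
  [/\ (forall i, 0 <= s i),
      (forall i j, (i <= j)%N -> (j < minn m n)%N -> s j <= s i) &
      (forall i, (minn m n <= i)%N -> s i = 0)].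

Lemma dd_sorted s : svd_ok s -> sorted (fun x y => y <= x) (map (dd s) (iota 0 n)).
Proof.
case=> h0 hm hz; have mnm : minn m n = m by apply/minn_idPl.
rewrite mnm in hm hz.
apply: (homo_sorted (e := leq)); last exact: iota_sorted.
move=> i j ij; rewrite /dd; case: (ltnP j m) => jm.
  rewrite (leq_ltn_trans ij jm); have := hm i j ij jm; have := h0 j; nra.
by case: ifP => _; rewrite ?sqr_ge0.
Qed.

Lemma svd_unique (Y : 'M[R]_(m, n)) U1 s1 V1 U2 s2 V2 :
  is_svd Y U1 s1 V1 -> is_svd Y U2 s2 V2 -> s1 = s2.
Proof.
case=> h1 h2 e1 ok1; case=> h3 h4 e2 ok2.
have P := svd_perm U1 U2 V1 V2 s1 s2 h1 h2 h3 h4 (etrans (esym e1) e2).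
have tr : transitive (fun x y : R => y <= x).
  by move=> x y z /= a b; apply: le_trans b a.
have an : antisymmetric (fun x y : R => y <= x).
  by move=> x y /andP[a b]; apply/le_anti; rewrite a b.
have E := sorted_eq tr an (@dd_sorted s1 ok1) (@dd_sorted s2 ok2) P.
have mnm : minn m n = m by apply/minn_idPl.
apply/funext => j; case: (ltnP j m) => jm.
  have jn : (j < n)%N by apply: leq_trans jm mn.
  have := congr1 (fun l => nth 0 l j) E => /=.
  rewrite !(nth_map 0%N) ?size_iota // nth_iota // add0n /dd jm => ej.
  case: ok1 => p1 _ _; case: ok2 => p2 _ _.
  by rewrite -(ger0_norm (p1 j)) -(ger0_norm (p2 j)) -!sqrtr_sqr ej.
case: ok1 => _ _ z1; case: ok2 => _ _ z2.
by rewrite z1 ?z2 ?mnm.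
Qed.

Lemma sigma_cases (Y : 'M[R]_(m, n)) :
  (exists U V, is_svd Y U (sigma Y) V) \/ sigma Y = (fun _ => 0).
Proof.
rewrite /sigma; case: xgetP => [x _ H|H]; first by left.
by right.
Qed.

Lemma sigma_svd (Y : 'M[R]_(m, n)) U s V : is_svd Y U s V -> sigma Y = s.
Proof.
move=> h.
have [U' [V' h']] : exists U V, is_svd Y U (sigma Y) V.
  by rewrite /sigma; apply: (@xgetI _ _ (fun s => exists U V, is_svd Y U s V) s); exists U, V.
exact: svd_unique h' h.
Qed.

Lemma sigma_ge0 (Y : 'M[R]_(m, n)) i : 0 <= sigma Y i.
Proof.
case: (sigma_cases Y) => [[U [V [_ _ _ [h _ _]]]]|->] //.
Qed.

Lemma sum_sqrt_dd t :
  \sum_(x <- map (dd t) (iota 0 n)) Num.sqrt x = \sum_(0 <= i < m) `|t i|.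
Proof.
rewrite big_map.
have -> : iota 0 n = index_iota 0 n by rewrite /index_iota subn0.
rewrite (big_cat_nat _ (n := m)) //= [X in _ + X]big1_seq ?addr0.
  apply: eq_big_nat => i /andP[_ im].
  by rewrite /dd im sqrtr_sqr.
move=> i /andP[_]; rewrite mem_index_iota => /andP[mi _].
by rewrite /dd ltnNge mi /= sqrtr0.
Qed.

Lemma nuc_le (Y : 'M[R]_(m, n)) U s V :
  U^T *m U = 1%:M -> V^T *m V = 1%:M -> Y = U *m rdiag m n s *m V^T ->
  nucnorm Y <= \sum_(0 <= i < m) `|s i|.
Proof.
move=> hU hV eY; have mnm : minn m n = m by apply/minn_idPl.
case: (sigma_cases Y) => [[U' [V' [h1 h2 e1 [p1 _ _]]]]|z].
  have P := svd_perm U' U V' V (sigma Y) s h1 h2 hU hV (etrans (esym e1) eY).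
  rewrite /nucnorm mnm -sum_sqrt_dd -(perm_big _ P) sum_sqrt_dd.
  rewrite le_eqVlt; apply/orP; left; by apply/eqP/eq_big_nat => i _; rewrite ger0_norm ?p1.
rewrite /nucnorm z big1 //; apply: sumr_ge0 => i _; apply: normr_ge0.
Qed.

Lemma rdiag_comb (a b : nat -> R) c :
  rdiag m n (fun i => a i + c * b i) = rdiag m n a + c *: rdiag m n b.
Proof. by apply/matrixP => i j; rewrite !mxE; case: eqP; rewrite ?mulr0 ?addr0. Qed.

Lemma rdiag_scale (b : nat -> R) c :
  rdiag m n (fun i => c * b i) = c *: rdiag m n b.
Proof. by apply/matrixP => i j; rewrite !mxE; case: eqP; rewrite ?mulr0. Qed.

Variable K : nat.
Hypothesis Km : (K < m)%N.

Definition tail (s : nat -> R) i := if (i < K)%N then 0 else s i.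

Section Key.
Variables (X : 'M[R]_(m, n)) (U : 'M[R]_m) (V : 'M[R]_n).
Hypothesis hX : is_svd X U (sigma X) V.
Let D := - (U *m rdiag m n (tail (sigma X)) *m V^T).

Lemma key_TK t : 0 < t -> t < 1 -> TK K (X + t *: D) = (1 - t) * TK K X.
Proof.
move=> t0 t1; have mnm : minn m n = m by apply/minn_idPl.
case: hX => hU hV eX [p0 pm pz]; rewrite mnm in pm pz.
set st := fun i => sigma X i + (- t) * tail (sigma X) i.
have eY : X + t *: D = U *m rdiag m n st *m V^T.
  rewrite /st rdiag_comb mulmxDr mulmxDl -eX /D scalerN -scaleNr.
  by rewrite -scalemxAr -scalemxAl.
have okY : is_svd (X + t *: D) U st V.
  split => //; split; rewrite ?mnm.
  - move=> i; rewrite /st /tail; case: ifP => _; rewrite ?mulr0 ?addr0 //.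
    have := p0 i; nra.
  - move=> i j ij jm; rewrite /st /tail; case: (ltnP j K) => jK.
      by rewrite (leq_ltn_trans ij jK) !mulr0 !addr0; apply: pm.
    have := pm i j ij jm; have := p0 j; have := p0 i.
    by case: ifP => _; nra.
  - by move=> i mi; rewrite /st /tail pz //; case: ifP => _; rewrite ?mulr0 addr0.
rewrite /TK (sigma_svd _ _ _ _ okY) mnm mulr_sumr; apply: eq_big_nat => i /andP[Ki _].
by rewrite /st /tail ltnNge Ki /=; ring.
Qed.

Lemma key_nuc t : 0 < t -> nucnorm (X - (X + t *: D)) <= t * TK K X.
Proof.
move=> t0; have mnm : minn m n = m by apply/minn_idPl.
case: hX => hU hV eX [p0 pm pz].
have e : X - (X + t *: D) = U *m rdiag m n (fun i => t * tail (sigma X) i) *m V^T.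
  rewrite rdiag_scale -[U *m (t *: _)]scalemxAr -[(t *: _) *m V^T]scalemxAl /D.
  set W := U *m _ *m V^T; move: W => W.
  by rewrite scalerN subKr.
have h := nuc_le _ _ _ _ hU hV e.
refine (le_trans h _).
rewrite /TK mnm (big_cat_nat _ (n := K)) //; last exact: ltnW.
rewrite big1_seq ?add0r; last first.
  by move=> i /andP[_]; rewrite mem_index_iota => /andP[_ iK]; rewrite /tail iK mulr0 normr0.
rewrite Monoid.simpm mulr_sumr le_eqVlt; apply/orP; left; apply/eqP; apply: eq_big_nat => i /andP[Ki _].
by rewrite /tail ltnNge Ki /= ger0_norm // mulr_ge0 // ltW.
Qed.
End Key.
End LA.

Theorem mainTheorem16 (R : realType) (m n K : nat) (gamma M : R)
    (f : 'M[R]_(m, n) -> \bar R) (C : set 'M[R]_(m, n)) (Xs : 'M[R]_(m, n)) :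
  (m <= n)%N -> (K < m)%N -> 0 < gamma ->
  (forall X, C X -> f X \is a fin_num) ->
  condC1 K C ->
  dir_diff_on (fun X => fine (f X)) C ->
  lipschitz_nuc_on (fun X => fine (f X)) C M ->
  d_stationary (fun X => fine (f X) + gamma * TK K X) C Xs ->
  M < gamma ->
  TK K Xs = 0.
Proof.
move=> mn Km g0 _ hC1 _ hLip [CX hst] Mg.
case: (sigma_cases _ _ _ Xs) => [[U0 [V0 [_ _ _ ok]]] | z]; last first.
  by rewrite /TK z big1.
have [U [V [hU hV eX hfe]]] := hC1 Xs CX.
have hX : is_svd Xs U (sigma Xs) V by split.
have [L hL L0] := hst _ hfe.
case: hfe => s' s'0 hs'.
set D := - (U *m rdiag m n (tail R K (sigma Xs)) *m V^T).
set T := TK K Xs.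
have T0 : 0 <= T by apply: sumr_ge0 => i _; apply: sigma_ge0.
set Mp := Num.max M 0.
have MMp : M <= Mp by rewrite le_max lexx.
have Mp0 : 0 <= Mp by rewrite le_max lexx orbT.
have Mpg : Mp < gamma by rewrite gt_max Mg g0.
have LT : L <= (Mp - gamma) * T.
  apply: (cvgr_to_le hL); near=> t.
  have t0 : 0 < t by near: t; apply: nbhs_right_gt.
  have t1 : t < 1 by near: t; apply: nbhs_right_lt; apply: ltr01.
  have ts : t < s' by near: t; apply: nbhs_right_lt.
  have CY := hs' t t0 ts.
  have eT := @key_TK R m n mn K Xs U V hX t t0 t1.
  have eN := @key_nuc R m n mn K Km Xs U V hX t t0.
  have hl := hLip _ _ CX CY.
  have N0 : 0 <= nucnorm (Xs - (Xs + t *: D)).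
    by apply: sumr_ge0 => i _; apply: sigma_ge0.
  rewrite /dquot ler_pdivrMr // eT -/T.
  set a := fine (f (Xs + t *: D)); set b := fine (f Xs).
  have hab : a - b <= Mp * (t * T).
    apply: (le_trans (ler_norm _)); rewrite distrC.
    apply: (le_trans hl); apply: (le_trans (ler_wpM2r N0 MMp)).
    exact: ler_wpM2l.
  nra.
nra.
Unshelve. all: end_near.
Qed.
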